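(* Let $N$ be a positive integer, let $G\in\mathbb{C}^{N\times N}$ and $\hat G^{-1}\in\mathbb{C}^{N\times N}$, and define the modeling-error matrix $\Delta=\hat G^{-1}G$. Write its entries in polar form as $\Delta_{ij}=\Delta_{m,ij}\,e^{\mathrm{i}\,\Delta_{p,ij}}$ with $\Delta_{m,ij}=|\Delta_{ij}|\ge 0$ and $\Delta_{p,ij}\in\mathbb{R}$ (here $\mathrm{i}=\sqrt{-1}$ and $i,j$ are indices), and assume $\Delta_{m,ii}\neq 0$ for all $i$. Let $\rho=\mathrm{diag}(\rho_1,\dots,\rho_N)$ with real $\rho_i$, and suppose that for every $i\in\{1,\dots,N\}$, $$\Delta_{m,ii}\cos\Delta_{p,ii} > \sum_{j\neq i}\Delta_{m,ij} \quad\text{and}\quad 0<\rho_i< 2\,\frac{\Delta_{m,ii}\cos\Delta_{p,ii}-\sum_{j\ne i}\Delta_{m,ij}}{\Delta_{m,ii}^2-\left(\sum_{j\neq i}\Delta_{m,ij}\right)^2}.$$ Then every eigenvalue of $I-\rho\Delta$ has magnitude less than one; in particular $G$ and $\hat G^{-1}$ are invertible, and for every $Y_d\in\mathbb{C}^N$ and every initial $U_0\in\mathbb{C}^N$ the sequence $U_k=U_{k-1}+\rho\,\hat G^{-1}(Y_d-GU_{k-1})$, $k\ge1$, converges to the desired input $U^*=G^{-1}Y_d$.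
   Context: This describes the iterative input update at a fixed frequency $\omega$ for a square multiple-input multiple-output linear system with transfer matrix $G=G(\omega)$, estimated inverse model $\hat G^{-1}=\hat G^{-1}(\omega)$, diagonal iteration gain $\rho=\rho(\omega)$, desired output $Y_d$ and input $U_k$ at iteration $k$. (Under the first condition, the denominator in the bound on $\rho_i$ is positive.) *)

(* Defs.v *)
From Stdlib Require Import Reals List.
Import ListNotations.
Open Scope R_scope.

(* Complex numbers z = (Re z, Im z). *)
Definition C : Type := (R * R)%type.
Definition C0 : C := (0, 0).
Definition C1 : C := (1, 0).
Definition RtoC (r : R) : C := (r, 0).
Definition Cadd (z w : C) : C := (fst z + fst w, snd z + snd w).
Definition Copp (z : C) : C := (- fst z, - snd z).
Definition Csub (z w : C) : C := Cadd z (Copp w).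
Definition Cmul (z w : C) : C :=
  (fst z * fst w - snd z * snd w, fst z * snd w + snd z * fst w).
Definition Cmod (z : C) : R := sqrt (fst z ^ 2 + snd z ^ 2).

Definition Csum (n : nat) (f : nat -> C) : C :=
  fold_right (fun k acc => Cadd (f k) acc) C0 (seq 0 n).
Definition Rsum (n : nat) (f : nat -> R) : R :=
  fold_right (fun k acc => f k + acc) 0 (seq 0 n).

(* N x N complex matrices and N-vectors, indexed by 0..N-1
   (values outside the range are irrelevant). *)
Definition Mat : Type := nat -> nat -> C.
Definition Vec : Type := nat -> C.

Definition idM : Mat := fun i j => if Nat.eqb i j then C1 else C0.
Definition mmul (N : nat) (A B : Mat) : Mat :=
  fun i j => Csum N (fun k => Cmul (A i k) (B k j)).
Definition mvmul (N : nat) (A : Mat) (v : Vec) : Vec :=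
  fun i => Csum N (fun k => Cmul (A i k) (v k)).
Definition msub (A B : Mat) : Mat := fun i j => Csub (A i j) (B i j).
Definition diag_mul (rho : nat -> R) (A : Mat) : Mat :=
  fun i j => Cmul (RtoC (rho i)) (A i j).
Definition vsub (u v : Vec) : Vec := fun i => Csub (u i) (v i).

Definition is_inverse (N : nat) (A B : Mat) : Prop :=
  forall i j, (i < N)%nat -> (j < N)%nat ->
    mmul N A B i j = idM i j /\ mmul N B A i j = idM i j.
Definition invertible (N : nat) (A : Mat) : Prop := exists B, is_inverse N A B.

Definition eigenvalue (N : nat) (A : Mat) (lam : C) : Prop :=
  exists v : Vec, (exists i, (i < N)%nat /\ v i <> C0) /\
    forall i, (i < N)%nat -> mvmul N A v i = Cmul lam (v i).

Definition vec_converges (N : nat) (U : nat -> Vec) (L : Vec) : Prop :=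
  forall eps, eps > 0 -> exists K, forall k, (k >= K)%nat ->
    forall i, (i < N)%nat -> Cmod (Csub (U k i) (L i)) < eps.

Fixpoint ilc_iter (N : nat) (rho : nat -> R) (Ghinv G : Mat) (Yd U0 : Vec)
    (k : nat) : Vec :=
  match k with
  | O => U0
  | S k' =>
      let Uk := ilc_iter N rho Ghinv G Yd U0 k' in
      fun i => Cadd (Uk i)
        (Cmul (RtoC (rho i)) (mvmul N Ghinv (vsub Yd (mvmul N G Uk)) i))
  end.

Definition offdiag_mod_sum (N : nat) (A : Mat) (i : nat) : R :=
  Rsum N (fun j => if Nat.eqb j i then 0 else Cmod (A i j)).

(* Main.v *)
Require Import Defs.
From Stdlib Require Import Reals List Lra Lia Psatz.
From Coquelicot Require Complex.
Import ListNotations.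
Open Scope R_scope.

Lemma Csum_S n f : Csum (S n) f = Cadd (Csum n f) (f n).
Proof.
  unfold Csum. rewrite seq_S, fold_right_app. simpl.
  generalize (seq 0 n). intro l; induction l as [|a l IH]; simpl.
  - unfold Cadd, C0; simpl. f_equal; ring.
  - rewrite IH. unfold Cadd; simpl. f_equal; ring.
Qed.

Lemma Rsum_S n f : Rsum (S n) f = Rsum n f + f n.
Proof.
  unfold Rsum. rewrite seq_S, fold_right_app. simpl.
  generalize (seq 0 n). intro l; induction l as [|a l IH]; simpl.
  - ring.
  - rewrite IH. ring.
Qed.

Lemma Rsum_0 f : Rsum 0 f = 0.
Proof. reflexivity. Qed.

Lemma Rsum_le n f g : (forall k, (k < n)%nat -> f k <= g k) -> Rsum n f <= Rsum n g.
Proof.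
  induction n; intros H. rewrite !Rsum_0; lra.
  rewrite !Rsum_S. assert (f n <= g n) by (apply H; lia).
  assert (Rsum n f <= Rsum n g) by (apply IHn; intros; apply H; lia). lra.
Qed.

Lemma Rsum_plus n f g : Rsum n (fun k => f k + g k) = Rsum n f + Rsum n g.
Proof. induction n. rewrite !Rsum_0; ring. rewrite !Rsum_S, IHn; ring. Qed.

Lemma Rsum_scal n c f : Rsum n (fun k => c * f k) = c * Rsum n f.
Proof. induction n. rewrite !Rsum_0; ring. rewrite !Rsum_S, IHn; ring. Qed.

Lemma Rsum_delta n i a : (i < n)%nat -> Rsum n (fun k => if Nat.eqb k i then a else 0) = a.
Proof.
  induction n; intros H. lia.
  rewrite Rsum_S. destruct (Nat.eqb n i) eqn:E.
  - apply Nat.eqb_eq in E; subst.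
    assert (Rsum i (fun k => if Nat.eqb k i then a else 0) = 0).
    { clear IHn H. assert (forall m, (m <= i)%nat -> Rsum m (fun k => if Nat.eqb k i then a else 0) = 0).
      { induction m; intros Hm. reflexivity. rewrite Rsum_S, IHm by lia.
        destruct (Nat.eqb m i) eqn:E2. apply Nat.eqb_eq in E2; lia. ring. }
      apply H; lia. }
    rewrite H0; ring.
  - apply Nat.eqb_neq in E. rewrite IHn by lia. ring.
Qed.


Lemma Cmod_add z w : Cmod (Cadd z w) <= Cmod z + Cmod w.
Proof. exact (Complex.Cmod_triangle z w). Qed.

Lemma Cmod_mul z w : Cmod (Cmul z w) = Cmod z * Cmod w.
Proof. exact (Complex.Cmod_mult z w). Qed.

Lemma Cmod_nonneg z : 0 <= Cmod z.
Proof. exact (Complex.Cmod_ge_0 z). Qed.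

Lemma Cmod_C0 : Cmod C0 = 0.
Proof. exact Complex.Cmod_0. Qed.

Lemma Cmod_Csum n f : Cmod (Csum n f) <= Rsum n (fun k => Cmod (f k)).
Proof.
  induction n. unfold Csum; simpl. rewrite Cmod_C0. unfold Rsum; simpl; lra.
  rewrite Csum_S, Rsum_S. eapply Rle_trans. apply Cmod_add. lra.
Qed.

Lemma Cmod_eq0 z : Cmod z = 0 -> z = C0.
Proof.
  intro H. destruct z as [a b]. unfold Cmod in H; simpl in H.
  apply sqrt_eq_0 in H; [|nra].
  unfold C0; f_equal; nra.
Qed.

Fixpoint nmax (n : nat) (f : nat -> R) : R :=
  match n with O => 0 | S n' => Rmax (nmax n' f) (f n') end.

Lemma nmax_ge n f k : (k < n)%nat -> f k <= nmax n f.
Proof.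
  induction n; intro H; simpl. lia.
  destruct (Nat.eq_dec k n). subst; apply Rmax_r.
  eapply Rle_trans; [apply IHn; lia | apply Rmax_l].
Qed.

Lemma nmax_nonneg n f : 0 <= nmax n f.
Proof. induction n; simpl. lra. eapply Rle_trans; [apply IHn | apply Rmax_l]. Qed.

Lemma nmax_le n f c : 0 <= c -> (forall k, (k < n)%nat -> f k <= c) -> nmax n f <= c.
Proof.
  induction n; intros H0 H; simpl. lra.
  apply Rmax_lub. apply IHn; auto. apply H; lia.
Qed.

Lemma nmax_lt n f c : 0 < c -> (forall k, (k < n)%nat -> f k < c) -> nmax n f < c.
Proof.
  induction n; intros H0 H; simpl. lra.
  apply Rmax_lub_lt. apply IHn; auto. apply H; lia.
Qed.

Lemma Cmod_RtoC_mul r w : 0 <= r -> Cmod (Cmul (RtoC r) w) = r * Cmod w.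
Proof.
  intro H. rewrite Cmod_mul. f_equal. change (Complex.Cmod (Complex.RtoC r) = r).
  rewrite Complex.Cmod_R. apply Rabs_right; lra.
Qed.

Lemma Cmod_neg w : Cmod (Csub C0 w) = Cmod w.
Proof. destruct w as [a b]; unfold Cmod, Csub, Cadd, Copp, C0; simpl. f_equal; ring. Qed.

Lemma offdiag_nonneg N D i : 0 <= offdiag_mod_sum N D i.
Proof.
  unfold offdiag_mod_sum.
  assert (E : Rsum N (fun _ => 0) = 0).
  { clear. induction N. reflexivity. rewrite Rsum_S, IHN; ring. }
  rewrite <- E at 1.
  apply Rsum_le. intros k _. destruct (Nat.eqb k i). lra. apply Cmod_nonneg.
Qed.

Definition Mof (rho : nat -> R) (D : Mat) : Mat := msub idM (diag_mul rho D).

Definition qrow N rho D i := Cmod (Mof rho D i i) + rho i * offdiag_mod_sum N D i.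

Lemma row_bound N D rho x X i : 0 <= rho i -> 0 <= X ->
  (forall k, (k < N)%nat -> Cmod (x k) <= X) -> (i < N)%nat ->
  Cmod (mvmul N (Mof rho D) x i) <= qrow N rho D i * X.
Proof.
  intros Hr HX Hx Hi. unfold mvmul. eapply Rle_trans. apply Cmod_Csum.
  eapply Rle_trans.
  apply (Rsum_le N _ (fun k => X * (if Nat.eqb k i then Cmod (Mof rho D i i) else 0)
     + rho i * (X * (if Nat.eqb k i then 0 else Cmod (D i k))))).
  - intros k Hk. rewrite Cmod_mul. destruct (Nat.eqb k i) eqn:E.
    + apply Nat.eqb_eq in E; subst. specialize (Hx i Hk).
      pose proof (Cmod_nonneg (Mof rho D i i)). nra.
    + apply Nat.eqb_neq in E.
      assert (Mof rho D i k = Csub C0 (Cmul (RtoC (rho i)) (D i k))) as ->.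
      { unfold Mof, msub, idM, diag_mul. destruct (Nat.eqb i k) eqn:E2.
        apply Nat.eqb_eq in E2; lia. reflexivity. }
      rewrite Cmod_neg, Cmod_RtoC_mul by auto.
      specialize (Hx k Hk). pose proof (Cmod_nonneg (D i k)). cbv beta iota. revert Hx H. generalize (Cmod (D i k)) (Cmod (x k)). intros a b Hb Ha. assert (0 <= rho i * a) by nra. nra.
  - rewrite Rsum_plus, Rsum_scal, Rsum_scal, Rsum_scal, Rsum_delta by auto.
    unfold qrow, offdiag_mod_sum. apply Req_le. ring.
Qed.

Lemma qrow_lt1 N D rho phase i :
  Cmod (D i i) <> 0 ->
  D i i = (Cmod (D i i) * cos (phase i i), Cmod (D i i) * sin (phase i i)) ->
  Cmod (D i i) * cos (phase i i) > offdiag_mod_sum N D i ->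
  0 < rho i ->
  rho i < 2 * ((Cmod (D i i) * cos (phase i i) - offdiag_mod_sum N D i)
               / (Cmod (D i i) ^ 2 - (offdiag_mod_sum N D i) ^ 2)) ->
  qrow N rho D i < 1.
Proof.
  intros Hm Hpol Hdom Hr Hrb. unfold qrow.
  pose proof (offdiag_nonneg N D i) as HR.
  set (R0 := offdiag_mod_sum N D i) in *.
  set (m := Cmod (D i i)) in *.
  set (c := cos (phase i i)) in *. set (s := sin (phase i i)) in *.
  assert (Hcs : c * c + s * s = 1).
  { pose proof (sin2_cos2 (phase i i)). unfold Rsqr in H. subst c s. lra. }
  assert (Hm0 : 0 < m). { pose proof (Cmod_nonneg (D i i)). subst m. lra. }
  assert (Hc1 : c <= 1) by (subst c; apply COS_bound).
  assert (HB : 0 < m ^ 2 - R0 ^ 2) by nra.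
  assert (Hk : rho i * (m ^ 2 - R0 ^ 2) < 2 * (m * c - R0)).
  { assert (2 * ((m * c - R0) / (m ^ 2 - R0 ^ 2)) * (m ^ 2 - R0 ^ 2) = 2 * (m * c - R0))
      by (field; lra). nra. }
  assert (Hy : 0 < 1 - rho i * R0) by nra.
  assert (HM : Mof rho D i i = (1 - rho i * (m * c), - (rho i * (m * s)))).
  { unfold Mof, msub, diag_mul, idM. rewrite Nat.eqb_refl. rewrite Hpol.
    unfold Csub, Cadd, Copp, Cmul, RtoC, C1; simpl. f_equal; ring. }
  rewrite HM. unfold Cmod; simpl.
  set (x := (1 - rho i * (m * c)) * ((1 - rho i * (m * c)) * 1) +
       - (rho i * (m * s)) * (- (rho i * (m * s)) * 1)).
  clearbody m c s R0. clear Hm Hpol HM Hrb.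
  assert (Hx0 : 0 <= x).
  { unfold x. clear. assert (forall a b : R, 0 <= a*(a*1) + -b*(-b*1)) by (intros; nra). apply H. }
  assert (Hxe : x = 1 - 2 * rho i * (m * c) + rho i * rho i * (m * m) * (c * c + s * s)).
  { unfold x. ring. }
  rewrite Hcs in Hxe.
  assert (H2 : rho i * (rho i * (m ^ 2 - R0 ^ 2)) < rho i * (2 * (m * c - R0))).
  { apply Rmult_lt_compat_l; auto. }
  assert (Hlt : x < (1 - rho i * R0) * (1 - rho i * R0)).
  { rewrite Hxe. clearbody x. clear - H2. nra. }
  pose proof (sqrt_sqrt x Hx0). pose proof (sqrt_pos x).
  clearbody x. generalize dependent (sqrt x). intros t Ht1 Ht2.
  clear - Ht1 Ht2 Hlt Hy Hx0. nra.
Qed.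

Lemma Csum_0 f : Csum 0 f = C0.
Proof. reflexivity. Qed.

Lemma Csum_ext n f g : (forall k, (k < n)%nat -> f k = g k) -> Csum n f = Csum n g.
Proof.
  induction n; intro H. reflexivity. rewrite !Csum_S, IHn, H by (auto; lia). reflexivity.
Qed.

Lemma Csum_sub n f g : Csum n (fun k => Csub (f k) (g k)) = Csub (Csum n f) (Csum n g).
Proof.
  induction n. rewrite !Csum_0. unfold Csub, Cadd, Copp, C0; simpl; f_equal; ring.
  rewrite !Csum_S, IHn. unfold Csub, Cadd, Copp; simpl; f_equal; ring.
Qed.

Lemma Csum_scal n a f : Csum n (fun k => Cmul a (f k)) = Cmul a (Csum n f).
Proof.
  induction n. rewrite !Csum_0. unfold Cmul, C0; simpl; f_equal; ring.
  rewrite !Csum_S, IHn. unfold Cmul, Cadd; simpl; f_equal; ring.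
Qed.

Lemma Csum_delta n i z : (i < n)%nat -> Csum n (fun k => if Nat.eqb i k then z else C0) = z.
Proof.
  assert (H0 : forall m, (m <= i)%nat -> Csum m (fun k => if Nat.eqb i k then z else C0) = C0).
  { induction m; intros Hm. reflexivity. rewrite Csum_S, IHm by lia.
    destruct (Nat.eqb i m) eqn:E2. apply Nat.eqb_eq in E2; lia.
    unfold Cadd, C0; simpl; f_equal; ring. }
  induction n; intros H. lia.
  rewrite Csum_S. destruct (Nat.eqb i n) eqn:E.
  - apply Nat.eqb_eq in E; subst. rewrite H0 by lia.
    unfold Cadd, C0; simpl. destruct z; simpl; f_equal; ring.
  - apply Nat.eqb_neq in E. rewrite IHn by lia. unfold Cadd, C0; destruct z; simpl; f_equal; ring.
Qed.

Lemma Mx_expand N rho D x i : (i < N)%nat ->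
  mvmul N (Mof rho D) x i = Csub (x i) (Cmul (RtoC (rho i)) (mvmul N D x i)).
Proof.
  intro Hi. unfold mvmul.
  rewrite (Csum_ext N _ (fun k => Csub (if Nat.eqb i k then x i else C0)
                           (Cmul (RtoC (rho i)) (Cmul (D i k) (x k))))).
  - rewrite Csum_sub, Csum_scal, Csum_delta by auto. reflexivity.
  - intros k _. unfold Mof, msub, diag_mul, idM.
    destruct (Nat.eqb i k) eqn:E.
    + apply Nat.eqb_eq in E; subst. destruct (x k), (D k k).
      unfold Csub, Cadd, Copp, Cmul, C1, RtoC; simpl; f_equal; ring.
    + destruct (x k), (D i k).
      unfold Csub, Cadd, Copp, Cmul, C0, RtoC; simpl; f_equal; ring.
Qed.

Lemma nmax_scal_le n f c B : 0 <= c -> 0 <= B -> (forall k, (k < n)%nat -> c * f k <= B) ->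
  c * nmax n f <= B.
Proof.
  induction n; intros Hc HB H; simpl. lra.
  apply Rmax_case. apply IHn; auto. apply H; lia.
Qed.

Definition vnorm N (x : Vec) := nmax N (fun k => Cmod (x k)).

Lemma vnorm_nonneg N x : 0 <= vnorm N x.
Proof. apply nmax_nonneg. Qed.

Lemma vnorm_ge N x k : (k < N)%nat -> Cmod (x k) <= vnorm N x.
Proof. intro; apply (nmax_ge N (fun k => Cmod (x k))); auto. Qed.

Section Contr.
Variables (N : nat) (M : Mat) (q : R).
Hypothesis Hq0 : 0 <= q.
Hypothesis Hq1 : q < 1.
Hypothesis Hc : forall x i, (i < N)%nat -> Cmod (mvmul N M x i) <= q * vnorm N x.

Lemma contr_eig lam : eigenvalue N M lam -> Cmod lam < 1.
Proof.
  intros [v [[i [Hi Hv]] Hev]].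
  assert (Hpos : 0 < vnorm N v).
  { pose proof (vnorm_ge N v i Hi). pose proof (Cmod_nonneg (v i)).
    destruct (Req_dec (Cmod (v i)) 0) as [E|E]. apply Cmod_eq0 in E; contradiction. lra. }
  assert (Cmod lam * vnorm N v <= q * vnorm N v).
  { apply nmax_scal_le. apply Cmod_nonneg. pose proof (vnorm_nonneg N v). nra.
    intros k Hk. rewrite <- Cmod_mul, <- Hev by auto. apply Hc; auto. }
  clear Hev Hc Hv. nra.
Qed.

Lemma contr_fix x : (forall i, (i < N)%nat -> mvmul N M x i = x i) ->
  forall i, (i < N)%nat -> x i = C0.
Proof.
  intros H i Hi.
  assert (vnorm N x <= q * vnorm N x).
  { apply nmax_le. pose proof (vnorm_nonneg N x). nra.
    intros k Hk. rewrite <- H by auto. apply Hc; auto. }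
  pose proof (vnorm_nonneg N x). pose proof (vnorm_ge N x i Hi). pose proof (Cmod_nonneg (x i)).
  apply Cmod_eq0. clear H Hc. nra.
Qed.

Lemma contr_conv (e : nat -> Vec) :
  (forall k i, (i < N)%nat -> e (S k) i = mvmul N M (e k) i) ->
  forall eps, eps > 0 -> exists K, forall k, (k >= K)%nat ->
    forall i, (i < N)%nat -> Cmod (e k i) < eps.
Proof.
  intros Hrec eps Heps.
  assert (Hk : forall k, vnorm N (e k) <= q ^ k * vnorm N (e 0%nat)).
  { induction k; simpl. lra.
    assert (vnorm N (e (S k)) <= q * vnorm N (e k)).
    { apply nmax_le. pose proof (vnorm_nonneg N (e k)). nra.
      intros j Hj. rewrite Hrec by auto. apply Hc; auto. }
    nra. }
  set (E0 := vnorm N (e 0%nat)). pose proof (vnorm_nonneg N (e 0%nat)). fold E0 in H, Hk.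
  destruct (pow_lt_1_zero q ltac:(rewrite Rabs_right; lra) (eps / (E0 + 1))) as [K HK].
  { apply Rdiv_lt_0_compat; lra. }
  exists K. intros k Hk' i Hi. specialize (HK k Hk'). rewrite Rabs_right in HK.
  2:{ apply Rle_ge, pow_le; lra. }
  pose proof (vnorm_ge N (e k) i Hi). specialize (Hk k).
  assert (eps / (E0 + 1) * E0 < eps).
  { unfold Rdiv. assert (eps * / (E0 + 1) * (E0 + 1) = eps) by (field; lra).
    assert (0 < / (E0+1)) by (apply Rinv_0_lt_compat; lra). nra. }
  assert (q ^ k * E0 <= eps / (E0 + 1) * E0) by nra.
  lra.
Qed.
End Contr.

Module MC.
From HB Require Import structures.
From mathcomp Require Import all_boot all_order all_algebra.
From mathcomp Require Import Rstruct.
From mathcomp.real_closed Require Import complex.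
Import GRing.Theory Num.Theory.
Local Open Scope ring_scope.

Definition toC (z : Defs.C) : R[i] := Complex z.1 z.2.
Definition fromC (w : R[i]) : Defs.C := let: Complex a b := w in (a, b).

Lemma toC_add z w : toC (Cadd z w) = toC z + toC w.
Proof. by case: z => a b; case: w => c d. Qed.

Lemma toC_mul z w : toC (Cmul z w) = toC z * toC w.
Proof. by case: z => a b; case: w => c d. Qed.

Lemma toC_sub z w : toC (Csub z w) = toC z - toC w.
Proof. by case: z => a b; case: w => c d. Qed.

Lemma toC_C0 : toC Defs.C0 = 0.
Proof. by []. Qed.

Lemma toC_C1 : toC Defs.C1 = 1.
Proof. by []. Qed.

Lemma toCK z : fromC (toC z) = z.
Proof. by case: z. Qed.

Lemma fromCK w : toC (fromC w) = w.
Proof. by case: w. Qed.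

Lemma toC_inj z w : toC z = toC w -> z = w.
Proof. by move=> h; rewrite -(toCK z) h toCK. Qed.

Lemma toC_Csum n f : toC (Csum n f) = \sum_(k < n) toC (f k).
Proof.
elim: n => [|n IH]; first by rewrite big_ord0.
by rewrite Csum_S toC_add IH big_ord_recr.
Qed.

Definition toM (N : nat) (A : Mat) : 'M[R[i]]_N := \matrix_(i < N, j < N) toC (A i j).
Definition toV (N : nat) (x : Vec) : 'cV[R[i]]_N := \col_(i < N) toC (x i).

Lemma toM_mmul N A B : toM N (mmul N A B) = toM N A *m toM N B.
Proof.
apply/matrixP => i j; rewrite !mxE /mmul toC_Csum.
by apply: eq_bigr => k _; rewrite toC_mul !mxE.
Qed.

Lemma toV_mvmul N A x : toV N (mvmul N A x) = toM N A *m toV N x.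
Proof.
apply/matrixP => i j; rewrite !mxE /mvmul toC_Csum.
by apply: eq_bigr => k _; rewrite toC_mul !mxE.
Qed.

Lemma toV_vsub N x y : toV N (vsub x y) = toV N x - toV N y.
Proof. by apply/matrixP => i j; rewrite !mxE /vsub toC_sub. Qed.

Lemma entryM N A i j (Hi : (i < N)%N) (Hj : (j < N)%N) :
  toC (A i j) = toM N A (Ordinal Hi) (Ordinal Hj).
Proof. by rewrite mxE. Qed.

Lemma entryV N x i (Hi : (i < N)%N) : toC (x i) = toV N x (Ordinal Hi) 0.
Proof. by rewrite mxE. Qed.

Lemma toC_idM (i j : nat) : toC (idM i j) = ((i == j)%:R : R[i]).
Proof.
rewrite /idM; case: (PeanoNat.Nat.eqb_spec i j) => [->|/eqP/negbTE ->].
  by rewrite eqxx toC_C1.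
by rewrite toC_C0.
Qed.

Lemma is_inverse_mx N A B : is_inverse N A B ->
  toM N A *m toM N B = 1%:M /\ toM N B *m toM N A = 1%:M.
Proof.
move=> H; split; apply/matrixP => i j;
  have [h1 h2] := H i j (ltP (ltn_ord i)) (ltP (ltn_ord j));
  rewrite -toM_mmul mxE ?h1 ?h2 toC_idM mxE.
  by [].
by [].
Qed.

Lemma lin_alg N G Ghinv Ginv Yd U i : is_inverse N G Ginv -> (i < N)%coq_nat ->
  mvmul N Ghinv (vsub Yd (mvmul N G U)) i =
  Csub Defs.C0 (mvmul N (mmul N Ghinv G) (vsub U (mvmul N Ginv Yd)) i).
Proof.
move=> Hinv /ltP Hi; apply: toC_inj.
rewrite toC_sub toC_C0 [LHS](entryV _ _ _ Hi) [in RHS](entryV _ _ _ Hi) !toV_mvmul !toV_vsub !toV_mvmul toM_mmul.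
have [h1 _] := is_inverse_mx _ _ _ Hinv.
have e : toV N Yd = toM N G *m (toM N Ginv *m toV N Yd) by rewrite mulmxA h1 mul1mx.
rewrite [in LHS]e -mulmxBr mulmxA -[toM N Ginv *m toV N Yd - toV N U]opprB mulmxN.
by rewrite [LHS]mxE sub0r.
Qed.

Lemma inv_of_unit n A : toM n.+1 A \in unitmx -> invertible n.+1 A.
Proof.
move=> uA.
pose B : Mat := fun i j => fromC (invmx (toM n.+1 A) (inord i) (inord j)).
have hB : toM n.+1 B = invmx (toM n.+1 A).
  by apply/matrixP => i j; rewrite mxE /B fromCK !inord_val.
exists B => i j /ltP Hi /ltP Hj; split; apply: toC_inj;
  rewrite (entryM _ _ _ _ Hi Hj) toM_mmul hB ?mulmxV ?mulVmx // toC_idM mxE //.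
Qed.

Lemma mc_inv N A B : (1 <= N)%coq_nat ->
  (forall x : Vec, (forall i, (i < N)%coq_nat -> mvmul N (mmul N A B) x i = Defs.C0) ->
     forall i, (i < N)%coq_nat -> x i = Defs.C0) ->
  invertible N A /\ invertible N B.
Proof.
case: N => [|n] HN Hx; first by inversion HN.
set P := toM n.+1 A *m toM n.+1 B.
have detP : \det P != 0.
  apply/negP => hd.
  have : \det P^T == 0 by rewrite det_tr.
  case/det0P => v vn0 hv.
  pose x : Vec := fun k => fromC (v 0 (inord k)).
  have hx : toV n.+1 x = v^T.
    by apply/matrixP => i j; rewrite (ord1 j) !mxE /x fromCK inord_val.
  have H0 : forall i, (i < n.+1)%coq_nat -> x i = Defs.C0.
    apply: Hx => i /ltP Hi; apply: toC_inj.
    rewrite (entryV _ _ _ Hi) toV_mvmul toM_mmul hx -/P.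
    have -> : P *m v^T = (v *m P^T)^T by rewrite trmx_mul trmxK.
    by rewrite hv trmx0 mxE.
  move/negP: vn0; apply; apply/eqP/matrixP => i j.
  rewrite (ord1 i) mxE.
  have := H0 j (ltP (ltn_ord j)).
  by rewrite /x => /(congr1 toC); rewrite fromCK inord_val.
move: detP; rewrite /P det_mulmx mulf_eq0 negb_or => /andP [dA dB].
split; apply: inv_of_unit; by rewrite unitmxE unitfE.
Qed.

End MC.

Open Scope R_scope.

Theorem lemma2 (N : nat) (G Ghinv : Mat) (rho : nat -> R)
    (phase : nat -> nat -> R) :
  (1 <= N)%nat ->
  (* polar form Delta_ij = Delta_m,ij e^{i Delta_p,ij}, Delta = Ghinv G *)
  (forall i j, (i < N)%nat -> (j < N)%nat ->
     mmul N Ghinv G i j =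
       (Cmod (mmul N Ghinv G i j) * cos (phase i j),
        Cmod (mmul N Ghinv G i j) * sin (phase i j))) ->
  (forall i, (i < N)%nat -> Cmod (mmul N Ghinv G i i) <> 0) ->
  (forall i, (i < N)%nat ->
     Cmod (mmul N Ghinv G i i) * cos (phase i i)
       > offdiag_mod_sum N (mmul N Ghinv G) i) ->
  (forall i, (i < N)%nat ->
     0 < rho i /\
     rho i < 2 * ((Cmod (mmul N Ghinv G i i) * cos (phase i i)
                   - offdiag_mod_sum N (mmul N Ghinv G) i)
                  / (Cmod (mmul N Ghinv G i i) ^ 2
                     - (offdiag_mod_sum N (mmul N Ghinv G) i) ^ 2))) ->
  (forall lam, eigenvalue N (msub idM (diag_mul rho (mmul N Ghinv G))) lam ->
     Cmod lam < 1) /\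
  invertible N G /\ invertible N Ghinv /\
  (forall Ginv, is_inverse N G Ginv ->
     forall Yd U0 : Vec,
       vec_converges N (ilc_iter N rho Ghinv G Yd U0) (mvmul N Ginv Yd)).
Proof.
  intros HN Hpol Hnz Hdom Hrho.
  set (D := mmul N Ghinv G) in *.
  set (q := nmax N (qrow N rho D)).
  assert (Hq1 : q < 1).
  { apply nmax_lt. lra. intros i Hi. destruct (Hrho i Hi) as [Hr1 Hr2].
    apply (qrow_lt1 N D rho phase i (Hnz i Hi) (Hpol i i Hi Hi) (Hdom i Hi) Hr1 Hr2). }
  assert (Hq0 : 0 <= q) by apply nmax_nonneg.
  assert (Hc : forall x i, (i < N)%nat -> Cmod (mvmul N (Mof rho D) x i) <= q * vnorm N x).
  { intros x i Hi.
    assert (H1 : Cmod (mvmul N (Mof rho D) x i) <= qrow N rho D i * vnorm N x).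
    { apply row_bound. destruct (Hrho i Hi); lra. apply vnorm_nonneg.
      intros k Hk. apply vnorm_ge; auto. auto. }
    assert (H2 : qrow N rho D i <= q) by (apply (nmax_ge N (qrow N rho D)); auto).
    pose proof (vnorm_nonneg N x).
    eapply Rle_trans. exact H1. apply Rmult_le_compat_r; auto. }
  assert (Hinj : forall x : Vec, (forall i, (i < N)%nat -> mvmul N D x i = C0) ->
            forall i, (i < N)%nat -> x i = C0).
  { intros x Hx. apply (contr_fix N (Mof rho D) q Hq0 Hq1 Hc x).
    intros i Hi. rewrite Mx_expand by auto. rewrite Hx by auto.
    destruct (x i). unfold Csub, Cadd, Copp, Cmul, RtoC, C0; simpl; f_equal; ring. }
  destruct (MC.mc_inv N Ghinv G HN Hinj) as [HiGh HiG].
  split; [| split; [| split]].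
  { intros lam Hl. exact (contr_eig N (Mof rho D) q Hq0 Hq1 Hc lam Hl). }
  { exact HiG. }
  { exact HiGh. }
  intros Ginv Hinv Yd U0 eps Heps.
  set (L := mvmul N Ginv Yd).
  destruct (contr_conv N (Mof rho D) q Hq0 Hq1 Hc
     (fun k => vsub (ilc_iter N rho Ghinv G Yd U0 k) L)) with (eps := eps)
     as [K HK]; auto.
  { intros k i Hi. rewrite Mx_expand by auto. simpl.
    unfold vsub at 1. rewrite (MC.lin_alg N G Ghinv Ginv Yd) by auto. fold L.
    fold D. unfold vsub.
    generalize (mvmul N D (fun i0 : nat => Csub (ilc_iter N rho Ghinv G Yd U0 k i0) (L i0)) i).
    intro w. destruct w, (ilc_iter N rho Ghinv G Yd U0 k i), (L i).
    unfold Csub, Cadd, Copp, Cmul, RtoC, C0; simpl; f_equal; ring. }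
  exists K. intros k Hk i Hi. exact (HK k Hk i Hi).
Qed.
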